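(* Let $p$ be a prime and let $H$ be a finite non-abelian group whose order is not divisible by $p$. Let $W\cong H\wr C$ where $C$ is cyclic of order $p$ (the regular wreath product, with base group $H^p$ permuted cyclically by $C$), and let $x\in W$ have order $p$. Then there exists $w\in W$ such that $x^w x$ is not a $p$-element. *)

(* Defs.v *)
From HB Require Import structures.
From mathcomp Require Import all_boot all_algebra all_fingroup all_solvable.
Set Implicit Arguments. Unset Strict Implicit. Unset Printing Implicit Defensive.
Import GRing.Theory.

(* Regular wreath product  H wr C_p  of a finite group H (a finGroupType)   *)
(* by the cyclic group C_p = 'Z_p (additive group of integers mod p; for     *)
(* p prime, 'Z_p has exactly p elements).  An element (f, c) stands for the  *)
(* product f * c of a base element f : H^p (a function 'Z_p -> H) and the   *)
(* top element c; c permutes the p coordinates of the base group cyclically. *)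

Section Wreath.
Variables (gT : finGroupType) (p : nat).

Definition wreath := ({ffun 'Z_p -> gT} * 'Z_p)%type.
HB.instance Definition _ := Finite.on wreath.

Definition wr_mul (x y : wreath) : wreath :=
  ([ffun i => (x.1 i * y.1 (i - x.2)%R)%g], (x.2 + y.2)%R).
Definition wr_one : wreath := ([ffun=> 1%g], 0%R).
Definition wr_inv (x : wreath) : wreath :=
  ([ffun i => ((x.1 (i + x.2)%R)^-1)%g], (- x.2)%R).

Lemma wr_mulA : associative wr_mul.
Proof.
move=> [f c] [g d] [h e]; rewrite /wr_mul /=; congr (_, _); last by rewrite addrA.
by apply/ffunP=> i; rewrite !ffunE mulgA opprD addrA.
Qed.

Lemma wr_mul1 : left_id wr_one wr_mul.
Proof.
move=> [f c]; rewrite /wr_mul /=; congr (_, _); last by rewrite add0r.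
by apply/ffunP=> i; rewrite !ffunE mul1g subr0.
Qed.

Lemma wr_mulV : left_inverse wr_one wr_inv wr_mul.
Proof.
move=> [f c]; rewrite /wr_mul /wr_one /=; congr (_, _); last by rewrite addNr.
by apply/ffunP=> i; rewrite !ffunE opprK mulVg.
Qed.

HB.instance Definition _ := Finite_isGroup.Build wreath wr_mulA wr_mul1 wr_mulV.

End Wreath.

(* Main.v *)
Require Import Defs.
From HB Require Import structures.
From mathcomp Require Import all_boot all_algebra all_fingroup all_solvable.
From mathcomp Require Import ring zify.
Set Implicit Arguments. Unset Strict Implicit. Unset Printing Implicit Defensive.
Import GRing.Theory.

Section S.
Variables (gT : finGroupType) (p : nat).
Local Notation W := (wreath gT p).

Lemma wmulE (x y : W) : (x * y)%g = wr_mul x y. Proof. by []. Qed.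
Lemma winvE (x : W) : (x^-1)%g = wr_inv x. Proof. by []. Qed.
Lemma woneE : (1%g : W) = wr_one gT p. Proof. by []. Qed.

Lemma wpow (z : W) n :
  (z ^+ n)%g = ([ffun i => (\prod_(j < n) z.1 (i - j%:R * z.2)%R)%g], (z.2 *+ n)%R).
Proof.
elim: n => [|n IH].
  by rewrite expg0 woneE /wr_one; congr (_,_); apply/ffunP=> i; rewrite !ffunE big_ord0.
rewrite expgS IH wmulE /wr_mul /=; congr (_,_); last by rewrite mulrS.
apply/ffunP=> i; rewrite !ffunE big_ord_recl /= mul0r subr0; congr (_ * _)%g.
apply: eq_bigr => j _; congr (z.1 _); rewrite /bump /= add1n mulrS; ring.
Qed.
End S.


Section S.
Variables (gT : finGroupType) (p : nat).
Local Notation W := (wreath gT p).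

Lemma base_elt1 (z : W) : prime p -> ~~ (p %| #|[set: gT]|) -> z.2 = 0%R -> (p.-elt z)%g -> z = 1%g.
Proof.
move=> pp ndv z20 pz.
have e1 : (z ^+ #|[set: gT]|)%g = 1%g.
  rewrite wpow z20 mul0rn woneE /wr_one; congr (_,_); apply/ffunP=> i; rewrite !ffunE.
  under eq_bigr do rewrite mulr0 subr0.
  by rewrite big_const_ord iter_mulg_1 (expg_cardG (in_setT _)).
move/eqP: e1; rewrite -order_dvdn => dv.
case/p_natP: pz => k ek.
apply/eqP; rewrite -order_eq1 ek.
case: k ek => [|k] ek; first by rewrite expn0.
exfalso; move/negP: ndv; apply; apply: dvdn_trans dv; rewrite ek expnS dvdn_mulr //.
Qed.

Lemma Zp_nat_eq n m : prime p -> ((n%:R : 'Z_p) == m%:R)%R = (n %% p == m %% p).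
Proof.
move=> pp; have p1 := prime_gt1 pp.
by rewrite -val_eqE /= !val_Zp_nat.
Qed.

Lemma Zp_mul_eq (d : 'Z_p) n m : prime p -> d != 0%R ->
  ((n%:R * d : 'Z_p) == m%:R * d)%R = (n %% p == m %% p).
Proof.
move=> pp dn0; have p1 := prime_gt1 pp.
have ud : (d \is a GRing.unit)%R.
  rewrite -(natr_Zp d) unitZpE // prime_coprime //.
  apply/negP; case: (posnP d) => [d0|dpos].
    by move: dn0; rewrite -val_eqE /= d0.
  move=> /(dvdn_leq dpos); have := ltn_ord d; move: (val d) (Zp_cast p1) => dv ->; lia.
by rewrite (inj_eq (mulIr ud)) Zp_nat_eq.
Qed.
End S.


Section S.
Variables (gT : finGroupType) (p : nat) (a b : gT).

Definition Gn n : gT := if n %% p == 0%N then a else if n %% p == 1%N then b else 1%g.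
Definition Kn j : gT := ((Gn (2 * j))^-1 * Gn (2 * j).+1)%g.

Lemma mod_small2 n : p <= n < p + p -> n %% p = n - p.
Proof.
move=> /andP[h1 h2]; rewrite -{1}(subnK h1) modnDr modn_small //; lia.
Qed.

Lemma Gn1 n : (n < p -> 2 <= n) -> (p <= n -> 2 + p <= n < p + p) -> Gn n = 1%g.
Proof.
move=> h1 h2; rewrite /Gn.
case: (ltnP n p) => hn.
  by rewrite modn_small //; have := h1 hn; case: n {h1 h2 hn} => [|[|]].
rewrite mod_small2; last by have := h2 hn; lia.
have := h2 hn; case: (n - p) (subnK hn) => [|[|k]] //; lia.
Qed.

Lemma prodK m : 0 < m -> p = m.*2.+1 ->
  (\prod_(j < p) Kn j = a^-1 * b * (a * b^-1))%g.
Proof.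
move=> m0 pE.
rewrite -(big_mkord xpredT Kn).
rewrite (big_cat_nat (n := m)) /=; [|lia|lia].
rewrite big_ltn; last lia.
rewrite big_nat_cond big1; last first.
  move=> j /andP[/andP[h1 h2] _]; rewrite /Kn !Gn1 ?invg1 ?mulg1 //; lia.
rewrite big_ltn; last lia.
rewrite big_ltn; last lia.
rewrite big_nat_cond big1; last first.
  move=> j /andP[/andP[h1 h2] _]; rewrite /Kn !Gn1 ?invg1 ?mulg1 //; lia.
rewrite /Kn /Gn mod0n modn_small; last lia.
rewrite eqxx /=.
have -> : (2 * m) %% p = 2 * m by rewrite modn_small //; lia.
have -> : (2 * m).+1 %% p = 0 by rewrite pE -mul2n modnn.
have -> : (2 * m.+1) %% p = 1 by rewrite mod_small2; lia.
have -> : (2 * m.+1).+1 %% p = 2 by rewrite mod_small2; lia.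
have -> : (2 * m == 0) = false by lia.
have -> : (2 * m == 1) = false by lia.
rewrite /=.
rewrite ?mulg1 ?mul1g ?invg1 ?mul1g ?mulg1. done.
Qed.
End S.


Section S.
Variables (gT : finGroupType) (p : nat).
Local Notation W := (wreath gT p).

Lemma frame (d : 'Z_p) (a b : gT) (z : W) : prime p -> ~~ (p %| #|[set: gT]|) ->
  d != 0%R -> (a * b != b * a)%g -> z = ([ffun=> 1%g], d) ->
  exists u : W, ~~ (p.-elt (z ^ u * z))%g.
Proof.
move=> pp ndv dn0 nab ->; have p1 := prime_gt1 pp.
pose g (i : 'Z_p) : gT := if i == 0%R then a else if i == (- d)%R then b else 1%g.
exists (([ffun i => g i], 0%R) : W).
set y := (_ * _)%g.
have yE : y = ([ffun i => ((g i)^-1 * g (i - d)%R)%g], (d + d)%R).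
  rewrite /y /conjg !wmulE winvE /wr_mul /wr_inv /=; congr (_,_).
    have e : forall j : 'Z_p, (j + - - 0 - d = j - d)%R by move=> j; ring.
    apply/ffunP=> i; rewrite !ffunE /= mul1g mulg1; congr (_ * _)%g; [congr (_^-1)%g; congr g; exact: addr0 | congr g; exact: e].
  ring.
have gE n : g (- (n%:R * d))%R = Gn p a b n.
  have e0 : (- (n%:R * d) == 0)%R = (n %% p == 0%N).
    by rewrite oppr_eq0 -[X in (_ == X)%R](mul0r d) -[X in (_ == X * _)%R]/(0%:R)%R Zp_mul_eq // mod0n.
  have e1 : (- (n%:R * d) == - d)%R = (n %% p == 1%N).
    by rewrite eqr_opp -[X in (_ == X)%R](mul1r d) -[X in (_ == X * _)%R]/(1%:R)%R Zp_mul_eq // (modn_small p1).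
  by rewrite /g /Gn e0 e1.
have comm_contra : (a^-1 * b * (a * b^-1))%g != 1%g.
  apply: contra nab => /eqP h; apply/eqP.
  have := congr1 (fun t => a * t * b)%g h.
  by rewrite mulg1 !mulgA mulgV mul1g mulgKV.
have [p2 | podd] := even_prime pp.
  have y2 : y.2 = 0%R.
    rewrite yE /= -mulr2n -mulr_natr.
    have -> : ((2%:R : 'Z_p) = 0)%R.
      by apply/eqP; rewrite -[X in (_ == X)%R]/(0%:R)%R Zp_nat_eq // p2.
    by rewrite mulr0.
  apply/negP => /(base_elt1 pp ndv y2) y1.
  have := congr1 (fun t : W => t.1 0%R) y1.
  rewrite yE woneE /= !ffunE /g eqxx sub0r oppr_eq0 (negbTE dn0) eqxx => ab.
  move/eqP: ab; rewrite -eq_invg_mul invgK => /eqP ab.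
  by move: nab; rewrite ab eqxx.
have pE : p = (p./2).*2.+1.
  by rewrite -[LHS](odd_double_half p) podd add1n.
have m0 : 0 < p./2.
  by case E: (p./2) => [|m] //; move: p1; rewrite pE E.
have pR : ((p%:R : 'Z_p) = 0)%R.
  by apply/eqP; rewrite -[X in (_ == X)%R]/(0%:R)%R Zp_nat_eq // modnn mod0n.
apply/negP => py.
have yp2 : (y ^+ p)%g.2 = 0%R.
  by rewrite wpow yE /= -mulr_natr pR mulr0.
have := base_elt1 pp ndv yp2 (p_eltX p py).
move=> /(congr1 (fun t : W => t.1 0%R)).
rewrite woneE /= ffunE wpow ffunE yE /=.
have e1 : forall j : nat, (0 - j%:R * (d + d) = - ((2 * j)%:R * d) :> 'Z_p)%R.
  by move=> j; rewrite natrM; ring.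
have e2 : forall j : nat, (- ((2 * j)%:R * d) - d = - ((2 * j).+1%:R * d) :> 'Z_p)%R.
  by move=> j; rewrite mulrS; ring.
under eq_bigr => j _ do rewrite ffunE e1 e2 !gE -/(Kn p a b j).
rewrite (prodK _ _ m0 pE) => h.
by move/eqP: comm_contra; rewrite h.
Qed.
End S.


Theorem lemma2p1 (p : nat) (gT : finGroupType) :
  prime p ->
  ~~ abelian [set: gT] ->
  ~~ (p %| #|[set: gT]|) ->
  forall x : wreath gT p, #[x]%g = p ->
  exists w : wreath gT p, ~~ (p.-elt (x ^ w * x))%g.
Proof.
move=> pp nab ndv x ox; have p1 := prime_gt1 pp.
have [/existsP[a /existsP[b ab]] | hne] := boolP [exists a : gT, exists b : gT, (a * b != b * a)%g]; last first.
  exfalso; move/negP: nab; apply; apply/centsP => a _ b _.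
  by move/existsPn: hne => /(_ a) /existsPn /(_ b); rewrite negbK => /eqP.
pose y0 : wreath gT p := ([ffun=> 1%g], 1%R).
have y0pow k : (y0 ^+ k)%g = ([ffun=> 1%g], (1 *+ k)%R).
  rewrite wpow; congr (_,_); apply/ffunP => i; rewrite !ffunE big1 // => j _; rewrite ffunE.
  done.
have cardW : #|[set: wreath gT p]| = (#|[set: gT]| ^ p * p)%N.
  rewrite cardsT /= card_prod card_ffun card_ord Zp_cast // cardsT //.
have partW : (#|[set: wreath gT p]|)`_p = p.
  rewrite cardW partnM ?expn_gt0 ?cardG_gt0 ?prime_gt0 // partnX part_p'nat ?p'natE //.
  by rewrite exp1n mul1n part_pnat_id // pnat_id.
have oy0 : #[y0]%g = p.
  have dv : (#[y0]%g %| p)%N.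
    rewrite order_dvdn y0pow; apply/eqP; rewrite woneE /wr_one; congr (_,_).
    by apply/eqP; rewrite -[X in (_ == X)%R]/(0%:R)%R Zp_nat_eq // modnn mod0n.
  case/primeP: pp => _ /(_ _ dv) /orP[|/eqP //].
  rewrite order_eq1 => /eqP /(congr1 snd) /eqP.
  by rewrite /= oner_eq0.
have sylx : (p.-Sylow([set: wreath gT p]) <[x]>%G)%g.
  by rewrite pHallE subsetT /= -orderE ox partW.
have syly : (p.-Sylow([set: wreath gT p]) <[y0]>%G)%g.
  by rewrite pHallE subsetT /= -orderE oy0 partW.
have [v _ hv] := Sylow_trans sylx syly.
have : (x ^ v)%g \in <[y0]>%g by rewrite hv memJ_conjg cycle_id.
case/cycleP => k; rewrite y0pow => xk.
have dn0 : ((1 *+ k : 'Z_p) != 0)%R.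
  apply/eqP => k0; have : (x ^ v)%g = 1%g by rewrite xk k0.
  move/eqP; rewrite conjg_eq1 -order_eq1 ox => /eqP p1'.
  by move: p1; rewrite p1'.
have [u hu] := frame (a := a) (b := b) pp ndv dn0 ab xk.
exists (v * u * v^-1)%g.
have -> : (x ^ (v * u * v^-1) * x = ((x ^ v) ^ u * x ^ v) ^ v^-1)%g.
  by rewrite conjMg -!conjgM mulgV conjg1 mulgA.
by rewrite p_eltJ.
Qed.
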